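(* Let $(\mathcal{X},\mathcal{F},\sigma)$ be a probability space with an $\alpha$-homogeneous atomic filtration, $0<\alpha\le1/2$. Let $w\in L^1(\mathcal{X})$, $w\ge0$, and suppose that for a cube $Q_0\in\mathcal{D}$ and a constant $A$ we have $\langle w^*\rangle_{Q_0}\le A\langle w\rangle_{Q_0}$. Let $E\subset Q_0$ be a union of some cubes in $\mathcal{D}(Q_0)=\{K\in\mathcal{D}:K\subset Q_0\}$. Then \[ w(E)\le 2A\,\frac{\ln(2/\alpha)}{\ln(|Q_0|/|E|)}\,w(Q_0), \] where $w(F)=\int_F w\,d\sigma$.
   Context: An atomic filtration on a probability space $(\mathcal{X},\mathcal{F},\sigma)$ is an increasing sequence of $\sigma$-algebras $\mathcal{F}_n\subset\mathcal{F}$, $n\ge0$, with $\mathcal{F}_0=\{\varnothing,\mathcal{X}\}$, $\mathcal{F}$ generated by the $\mathcal{F}_n$, and such that for each $n$ there is a countable collection $\mathcal{D}_n$ of disjoint sets (''cubes'') with every set of $\mathcal{F}_n$ a union of sets of $\mathcal{D}_n$. Write $\mathcal{D}=\bigcup_n\mathcal{D}_n$, $|A|=\sigma(A)$, and for $Q\in\mathcal{D}_n$ let $\operatorname{ch}Q=\{R\in\mathcal{D}_{n+1}:R\subset Q\}$. The filtration is $\alpha$-homogeneous if $|Q'|\ge\alpha|Q|$ for every cube $Q$ and every $Q'\in\operatorname{ch}Q$. For $|A|>0$, $\langle f\rangle_A=|A|^{-1}\int_A f$. Let $\mathbf{E}_nf=\sum_{Q\in\mathcal{D}_n}\langle f\rangle_Q\mathbf{1}_Q$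 and $f^*(x)=\sup_{n\ge0}|\mathbf{E}_nf(x)|$ (martingale maximal function). *)

(* Defs.v *)
From HB Require Import structures.
From mathcomp Require Import all_boot all_order all_algebra.
From mathcomp Require Import all_classical all_reals all_analysis.
Set Implicit Arguments. Unset Strict Implicit. Unset Printing Implicit Defensive.
Import Order.TTheory GRing.Theory Num.Theory.
Import numFieldNormedType.Exports.
Local Open Scope classical_set_scope.
Local Open Scope ring_scope.

Section defs.
Context {d : measure_display} {T : measurableType d} {R : realType}.

Definition filtration (F : nat -> set (set T)) : Prop :=
  [/\ forall n, sigma_algebra setT (F n),
      forall n, F n `<=` measurable,
      forall n, F n `<=` F n.+1,
      F 0%N = [set set0; setT] &
      (measurable : set (set T)) = <<s \bigcup_n F n >>].

Definition atomic (F D : nat -> set (set T)) : Prop :=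
  [/\ forall n, countable (D n),
      forall n Q Q', D n Q -> D n Q' -> Q <> Q' -> Q `&` Q' = set0,
      forall n, D n `<=` F n &
      forall n S, F n S ->
        exists C : set (set T), C `<=` D n /\ S = \bigcup_(Q in C) Q].

Definition cubes (D : nat -> set (set T)) : set (set T) := \bigcup_n D n.

Definition homogeneous (sigma : set T -> \bar R) (D : nat -> set (set T))
    (alpha : R) : Prop :=
  forall n Q Q', D n Q -> D n.+1 Q' -> Q' `<=` Q ->
    (alpha%:E * sigma Q <= sigma Q')%E.

Definition avg (sigma : {measure set T -> \bar R}) (A : set T) (f : T -> R)
  : \bar R :=
  ((fine (sigma A))^-1)%:E * \int[sigma]_(y in A) (f y)%:E.

Definition condexp (sigma : {measure set T -> \bar R}) (D : nat -> set (set T))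
  (n : nat) (f : T -> R) (x : T) : \bar R :=
  (\sum_(Q \in D n `&` [set Q | Q x]) avg sigma Q f)%E.

Definition maxf (sigma : {measure set T -> \bar R}) (D : nat -> set (set T))
  (f : T -> R) (x : T) : \bar R :=
  ereal_sup (range (fun n => `|condexp sigma D n f x|%E)).

Definition wmeas (sigma : {measure set T -> \bar R}) (w : T -> R) (A : set T)
  : \bar R := \int[sigma]_(x in A) (w x)%:E.

End defs.

(* Main.v *)
Require Import Defs.
From HB Require Import structures.
From mathcomp Require Import all_boot all_order all_algebra.
From mathcomp Require Import all_classical all_reals all_analysis.
From mathcomp Require Import measurable_realfun.
Import Order.TTheory GRing.Theory Num.Theory.
Import numFieldNormedType.Exports.
Local Open Scope classical_set_scope.
Local Open Scope ring_scope.
From mathcomp Require Import ring lra.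
Set Implicit Arguments. Unset Strict Implicit. Unset Printing Implicit Defensive.

Section enum.
Context {T : Type}.

Lemma enum_countable (S : set (set T)) : countable S ->
  exists e : nat -> set T, [/\ forall i, e i = set0 \/ S (e i),
    forall i j, e i = e j -> e i !=set0 -> i = j &
    forall K, S K -> K !=set0 -> exists i, e i = K].
Proof.
move/countable_injP => [f finj].
pose e i := match pselect (exists K, [/\ S K, K !=set0 & f K = i]) with
  | left h => proj1_sig (cid h) | right _ => set0 end.
have eP i : e i = set0 \/ [/\ S (e i), e i !=set0 & f (e i) = i].
  rewrite /e; case: pselect => [h|_]; [right; exact: (proj2_sig (cid h))|by left].
exists e; split.
- by move=> i; case: (eP i) => [->|[]]; [left|right].
- move=> i j eij ne.
  case: (eP i) => [h|[_ _ fi]]; first by move: ne; rewrite h => /set0P; rewrite eqxx.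
  case: (eP j) => [h|[_ _ fj]]; first by move: ne; rewrite eij h => /set0P; rewrite eqxx.
  by rewrite -fi -fj eij.
- move=> K SK neK; exists (f K); rewrite /e; case: pselect => [h|nh].
    case: (proj2_sig (cid h)) => S1 _ f1; apply: finj => //; exact: mem_set.
  by exfalso; apply: nh; exists K.
Qed.

Lemma enum_family (S : set (set T)) : countable S ->
  exists e : nat -> set T, [/\ forall i, e i = set0 \/ S (e i),
   (forall K K', S K -> S K' -> K `&` K' !=set0 -> K = K') -> trivIset setT e &
   \bigcup_(K in S) K = \bigcup_i e i].
Proof.
move=> /enum_countable [e [e1 e2 e3]]; exists e; split => //.
- move=> dis i j _ _ [y [yi yj]].
  case: (e1 i) => [h|Si]; first by move: yi; rewrite h.
  case: (e1 j) => [h|Sj]; first by move: yj; rewrite h.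
  apply: e2; first exact: dis Si Sj (ex_intro _ y (conj yi yj)).
  by exists y.
- apply/seteqP; split => y.
    move=> [K SK Ky]; have [i ei] := e3 K SK (ex_intro _ y Ky).
    by exists i => //; rewrite ei.
  move=> [i _ yi]; case: (e1 i) => [h|Si]; first by move: yi; rewrite h.
  by exists (e i).
Qed.

End enum.

Section cubes.
Context {d : measure_display} {T : measurableType d} (F D : nat -> set (set T)).
Hypotheses (hF : filtration F) (hD : atomic F D).

Lemma Fmono n m : (n <= m)%N -> F n `<=` F m.
Proof.
move: hF => [_ _ hFi _ _]; elim: m => [|m IH].
  by rewrite leqn0 => /eqP ->.
rewrite leq_eqVlt => /orP[/eqP -> //|]; rewrite ltnS => /IH h A /h; exact: hFi.
Qed.

Lemma cube_meas n K : D n K -> measurable K.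
Proof. by move: hF hD => [_ hFm _ _ _] [_ _ hDF _] /hDF /hFm. Qed.

Lemma cubes_meas K : cubes D K -> measurable K.
Proof. by move=> [n _]; exact: cube_meas. Qed.

Lemma cube_cover n x : exists K, D n K /\ K x.
Proof.
move: hF hD => [hsa _ _ _ _] [_ _ _ hDa].
have : F n setT.
  by case: (hsa n) => h0 hc _; rewrite -(setD0 setT); exact: hc.
move=> /hDa [C [CD eC]].
have : (\bigcup_(Q in C) Q) x by rewrite -eC.
by move=> [K CK Kx]; exists K; split => //; exact: CD.
Qed.

Lemma cube_uniq n K K' x : D n K -> D n K' -> K x -> K' x -> K = K'.
Proof.
move: hD => [_ hdis _ _] h h' Kx K'x.
case: (pselect (K = K')) => // neq.
have := hdis n K K' h h' neq => e.
have : (K `&` K') x by split.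
by rewrite e.
Qed.

Lemma cube_nested n p Q Q' : (n <= p)%N -> D n Q -> D p Q' ->
  Q' `<=` Q \/ Q' `&` Q = set0.
Proof.
move=> np hQ hQ'.
move: hD => [_ hdis hDF hDa].
have FQ : F p Q by apply: (Fmono np); exact: hDF.
have [C [CD eC]] := hDa p Q FQ.
case: (pselect (C Q')) => [CQ'|nC].
  by left; rewrite eC => y Q'y; exists Q'.
right; rewrite eC; apply/seteqP; split => // y [Q'y [K CK Ky]].
have neq : K <> Q' by move=> e; apply: nC; rewrite -e.
have := hdis p K Q' (CD _ CK) hQ' neq => e.
have : (K `&` Q') y by split.
by rewrite e.
Qed.

Lemma cubes_countable : countable (cubes D).
Proof.
move: hD => [hc _ _ _].
rewrite /cubes; apply: bigcup_countable => //; exact: countableP.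
Qed.

Lemma union_cubes_meas (C : set (set T)) : C `<=` cubes D ->
  measurable (\bigcup_(K in C) K).
Proof.
move=> CD.
have cC : countable C.
  by apply: sub_countable cubes_countable; exact: subset_card_le.
have [e [e1 _ e3]] := enum_family cC.
rewrite e3; apply: bigcupT_measurable => i.
by case: (e1 i) => [->//|/CD]; exact: cubes_meas.
Qed.

End cubes.

Section maxf.
Context {d : measure_display} {T : measurableType d} {R : realType}
  (sigma : {measure set T -> \bar R}) (F D : nat -> set (set T)).
Hypotheses (hF : filtration F) (hD : atomic F D).
Context (w : T -> R) (hw0 : forall x, 0 <= w x).
Local Open Scope ereal_scope.

Lemma avg_ge0 K : 0 <= avg sigma K w.
Proof.
rewrite /avg; apply: mule_ge0; last by apply: integral_ge0 => x _; rewrite lee_fin.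
by rewrite lee_fin invr_ge0 fine_ge0.
Qed.

Lemma condexp_cube n K x : D n K -> K x -> condexp sigma D n w x = avg sigma K w.
Proof.
move=> hK Kx; rewrite /condexp.
have -> : D n `&` [set Q | Q x] = [set K].
  apply/seteqP; split => [Q [hQ Qx]|Q ->] //.
  exact: (cube_uniq hD hQ hK Qx Kx).
by rewrite fsbig_set1.
Qed.

Lemma maxf_ge n K x : D n K -> K x -> avg sigma K w <= maxf sigma D w x.
Proof.
move=> hK Kx; rewrite /maxf; apply: ereal_sup_ubound; exists n => //.
by rewrite (condexp_cube hK Kx) gee0_abs // avg_ge0.
Qed.

Lemma maxf_ge0 x : 0 <= maxf sigma D w x.
Proof.
have [K [hK Kx]] := cube_cover hF hD 0 x.
exact: le_trans (avg_ge0 K) (maxf_ge hK Kx).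
Qed.

Lemma maxf_meas : measurable_fun setT (maxf sigma D w : T -> \bar R).
Proof.
have hn n : measurable_fun setT (fun x => `|condexp sigma D n w x|).
  move=> _ Y mY; rewrite setTI.
  have -> : (fun x => `|condexp sigma D n w x|) @^-1` Y =
      \bigcup_(K in [set K | D n K /\ Y `|avg sigma K w|]) K.
    apply/seteqP; split => x.
      move=> Yx; have [K [hK Kx]] := cube_cover hF hD n x.
      exists K => //; split => //; rewrite -(condexp_cube hK Kx); exact: Yx.
    by move=> [K [hK YK] Kx]; rewrite /preimage /= (condexp_cube hK Kx).
  by apply: (union_cubes_meas hF hD) => K [hK _]; exists n.
have -> : maxf sigma D w =
    (fun x => esups ((fun n x => `|condexp sigma D n w x|) ^~ x) 0%N).
  apply: funext => x; rewrite /maxf /esups /sdrop /=.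
  by congr ereal_sup; apply/seteqP; split => y [n _ <-]; exists n.
exact: measurable_fun_esups.
Qed.

End maxf.

Lemma minP (P : nat -> Prop) n0 : P n0 ->
  exists n, P n /\ forall k, (k < n)%N -> ~ P k.
Proof.
move=> P0; have ex : exists n, `[< P n >] by exists n0; exact/asboolP.
case: (ex_minnP ex) => n /asboolP Pn hmin; exists n; split => // k kn Pk.
by have := hmin k (asboolT Pk); rewrite leqNgt kn.
Qed.

Section step.
Context {d : measure_display} {T : measurableType d} {R : realType}
  (sigma : probability T R) (F D : nat -> set (set T)).
Hypotheses (hF : filtration F) (hD : atomic F D).
Context (alpha : R) (hhom : homogeneous sigma D alpha)
  (halpha : 0 < alpha <= 1 / 2).
Context (w : T -> R) (hwint : sigma.-integrable setT (fun x => (w x)%:E))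
  (hw0 : forall x, 0 <= w x).
Context (Q0 : set T) (m : nat) (hQ0 : D m Q0).

Definition sr (A : set T) : R := fine (sigma A).
Definition nr (A : set T) : R := fine (wmeas sigma w A).

Lemma sE A : measurable A -> sigma A = (sr A)%:E.
Proof.
move=> mA; rewrite /sr fineK // ge0_fin_numE ?measure_ge0 //.
by rewrite (le_lt_trans (probability_le1 _ mA)) // ltey.
Qed.

Lemma sE' A : measurable A ->
  (sigma : {measure set T -> \bar R}) A = (sr A)%:E.
Proof. by move=> mA; exact: (sE mA). Qed.

Lemma sr_ge0 A : 0 <= sr A.
Proof. by rewrite /sr fine_ge0. Qed.

Lemma wmeasf A : measurable_fun A (fun x => (w x)%:E).
Proof.
by apply: (measurable_funS measurableT) => //; exact: measurable_int hwint.
Qed.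

Lemma wmeas_ge0 A : (0 <= wmeas sigma w A)%E.
Proof. by apply: integral_ge0 => x _; rewrite lee_fin. Qed.

Lemma nuE A : measurable A -> wmeas sigma w A = (nr A)%:E.
Proof.
move=> mA; rewrite /nr fineK // ge0_fin_numE ?wmeas_ge0 //.
have /integrableP [_ hfin] := hwint.
apply: le_lt_trans hfin.
apply: le_trans (ge0_subset_integral _ _ _ _ _ (subsetT A)) _ => //.
- exact: wmeasf.
- by move=> x _; rewrite lee_fin.
- by apply: ge0_le_integral => //; [move=> x _; rewrite lee_fin|exact: wmeasf|
    apply: measurableT_comp => //; exact: wmeasf|move=> x _; rewrite gee0_abs// lee_fin].
Qed.

Lemma nr_ge0 A : 0 <= nr A.
Proof. by rewrite /nr fine_ge0 // wmeas_ge0. Qed.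

Definition Qual S K := [/\ cubes D K, K `<=` Q0 &
  ((alpha / 2)%:E * sigma K <= sigma (K `&` S))%E].
Definition Mx S K := Qual S K /\
  forall K', Qual S K' -> K `&` K' !=set0 -> K' `<=` K.

Lemma exists_max S K0 x : Qual S K0 -> K0 x -> exists K, Mx S K /\ K x.
Proof.
move=> q0 x0; case: (q0) => [[n0 _ hn0] _ _].
pose P n := exists K, [/\ D n K, Qual S K & K x].
have P0 : P n0 by exists K0.
have [n [[K [hK qK Kx]] hmin]] := minP P0.
exists K; split => //; split => // K' qK' [y [Ky K'y]].
case: (qK') => [[n' _ hK'] _ _].
case: (leqP n' n) => [n'n|nn'].
- have [KK'|dis] := cube_nested hF hD n'n hK' hK; last first.
    by have : (K `&` K') y by []; rewrite dis.
  move: n'n; rewrite leq_eqVlt => /orP[/eqP e|lt].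
    by subst n'; rewrite (cube_uniq hD hK' hK (KK' x Kx) Kx).
  by exfalso; apply: (hmin n' lt); exists K'; split => //; exact: KK'.
- have [//|dis] := cube_nested hF hD (ltnW nn') hK hK'.
  by have : (K' `&` K) y by []; rewrite dis.
Qed.

Lemma max_half S K : measurable S ->
  (sigma (Q0 `&` S) < (alpha / 2)%:E * sigma Q0)%E -> Mx S K ->
  (2%:E * sigma (K `&` S) <= sigma K)%E.
Proof.
move=> mS hQ [qK maxK].
case: (pselect (K = set0)) => [->|K0].
  by rewrite set0I measure0 mule0.
have /set0P [x Kx] : K != set0 by apply/eqP.
case: (qK) => [[n0 _ hn0] KQ0 qual].
have [n [hK hmin]] := minP (P := fun n => D n K) hn0.
have mK := cube_meas hF hD hK.
case: (leqP n m) => [nm|mn].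
  exfalso; have [Q0K|dis] := cube_nested hF hD nm hK hQ0; last first.
    have : (Q0 `&` K) x by split => //; exact: KQ0.
    by rewrite dis.
  have eK : K = Q0 by apply/seteqP; split.
  by move: hQ; rewrite ltNge -eK qual.
have np : n = (n.-1).+1 by rewrite prednK // (leq_ltn_trans (leq0n m) mn).
set p := n.-1 in np.
have mp : (m <= p)%N by rewrite -ltnS -np.
have hK1 : D p.+1 K by rewrite -np.
have [P [hP Px]] := cube_cover hF hD p x.
have PQ0 : P `<=` Q0.
  have [//|dis] := cube_nested hF hD mp hQ0 hP.
  have : (P `&` Q0) x by split => //; exact: KQ0.
  by rewrite dis.
have KP : K `<=` P.
  have [//|dis] := cube_nested hF hD (leqnSn p) hP hK1.
  by have : (K `&` P) x by []; rewrite dis.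
have nq : ~ Qual S P.
  move=> qP; have PK := maxK P qP (ex_intro _ x (conj Kx Px)).
  have eK : K = P by apply/seteqP; split.
  by apply: (hmin p); [rewrite np|rewrite eK].
have mP := cube_meas hF hD hP.
have hl : (sigma (P `&` S) < (alpha / 2)%:E * sigma P)%E.
  rewrite ltNge; apply/negP => h; apply: nq; split => //; exists p => //.
have hh := hhom hP hK1 KP.
have hKS : (sigma (K `&` S) <= sigma (P `&` S))%E.
  by apply: le_measure; rewrite ?inE; [exact: measurableI|exact: measurableI|exact: setSI].
move: hl hh hKS; rewrite !sE //; try exact: measurableI.
rewrite -!EFinM !lte_fin !lee_fin => hl hh hKS.
nra.
Qed.


Lemma real_gain (k k2 kS nK nS : R) : k = k2 + kS -> 2 * kS <= k -> 0 <= kS ->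
  0 <= k2 -> 0 <= nS -> nS <= nK -> (k = 0 -> nS = 0) ->
  2^-1 * nS <= k^-1 * nK * k2.
Proof.
move=> ek hk kS0 k20 nS0 nSK hz.
case: (eqVneq k 0) => [k0|kn0].
  by rewrite (hz k0) k0 invr0 !mul0r mulr0.
have kp : 0 < k by rewrite lt_neqAle eq_sym kn0 /=; lra.
set t := k^-1 * nK.
have tk : t * k = nK by rewrite /t mulrAC mulVf // mul1r.
have t0 : 0 <= t by rewrite /t mulr_ge0 // ?invr_ge0; lra.
nra.
Qed.

Lemma cube_gain S K : measurable S ->
  (sigma (Q0 `&` S) < (alpha / 2)%:E * sigma Q0)%E -> (K = set0 \/ Mx S K) ->
  ((2^-1)%:E * wmeas sigma w (K `&` S) <=
    \int[sigma]_(x in K `\` S) maxf sigma D w x)%E.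
Proof.
move=> mS hQ [->|mK].
  rewrite set0I /wmeas integral_set0 mule0; apply: integral_ge0 => x _.
  exact: (maxf_ge0 sigma hF hD hw0 x).
have hh := max_half mS hQ mK.
case: (mK) => [[[n _ hK] KQ0 _] _].
have mK' := cube_meas hF hD hK.
have mKS : measurable (K `\` S) by apply: measurableD.
have mKI : measurable (K `&` S) by apply: measurableI.
have h1 : (\int[sigma]_(x in K `\` S) (cst (avg sigma K w)) x <=
    \int[sigma]_(x in K `\` S) maxf sigma D w x)%E.
  apply: ge0_le_integral => //.
  - by move=> x _; apply: avg_ge0.
  - exact: (measurable_funS measurableT (subsetT _) (maxf_meas sigma hF hD w)).
  - by move=> x [Kx _]; apply: (maxf_ge sigma hD hw0 hK Kx).
apply: le_trans h1.
rewrite integral_cst //.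
have eavg : avg sigma K w = (((sr K)^-1)%:E * (nr K)%:E)%E.
  by rewrite /avg -(nuE mK').
rewrite eavg (nuE mKI) (sE' mKS) -!EFinM lee_fin.
have hDI1 : sr K = sr (K `\` S) + sr (K `&` S).
  by apply: EFin_inj; rewrite EFinD -(sE mKS) -(sE mKI) -(sE mK'); exact: measureDI.
move: hh; rewrite (sE mK') (sE mKI) -EFinM lee_fin => hh.
have hmon : nr (K `&` S) <= nr K.
  have : (wmeas sigma w (K `&` S) <= wmeas sigma w K)%E.
    apply: ge0_subset_integral => //; do ?[exact: wmeasf|by move=> x _; rewrite lee_fin|exact: subIsetl].
  by rewrite (nuE mKI) (nuE mK') lee_fin.
have hz : sr K = 0 -> nr (K `&` S) = 0.
  move=> k0.
  have s0 : sigma (K `&` S) = 0%E.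
    rewrite (sE mKI); congr (_%:E); have := sr_ge0 (K `&` S); lra.
  have : wmeas sigma w (K `&` S) = 0%E by apply: null_set_integral => //; exact: wmeasf.
  by rewrite (nuE mKI) => -[].
exact: real_gain hDI1 hh (sr_ge0 _) (sr_ge0 _) (nr_ge0 _) hmon hz.
Qed.

Lemma step S : measurable S -> S `<=` Q0 ->
  (forall x, S x -> exists K, [/\ cubes D K, K `<=` S & K x]) ->
  (sigma (Q0 `&` S) < (alpha / 2)%:E * sigma Q0)%E ->
  exists S', [/\ measurable S', S `<=` S', S' `<=` Q0 &
     (forall x, S' x -> exists K, [/\ cubes D K, K `<=` S' & K x])] /\
     [/\ ((alpha / 2)%:E * sigma S' <= sigma S)%E,
     (2%:E * sigma S <= sigma S')%E &
     (\int[sigma]_(x in S) maxf sigma D w x + (2^-1)%:E * wmeas sigma w S <=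
        \int[sigma]_(x in S') maxf sigma D w x)%E].
Proof.
move=> mS SQ0 cS hQ.
have /andP[a0 a1] := halpha.
set M := Mx S.
have MC : M `<=` cubes D by move=> K [[]].
have cM : countable M.
  by apply: sub_countable (cubes_countable hD); exact: subset_card_le.
have disM : forall K K', M K -> M K' -> K `&` K' !=set0 -> K = K'.
  move=> K K' [qK mK] [qK' mK'] ne; apply/seteqP; split.
    by apply: mK' qK _; rewrite setIC.
  exact: mK qK' ne.
have [e [e1 etriv eU]] := enum_family cM.
have te := etriv disM.
set S' := \bigcup_(K in M) K.
have mS' : measurable S' := union_cubes_meas hF hD MC.
have SS' : S `<=` S'.
  move=> x Sx; have [K [cK KS Kx]] := cS x Sx.
  have qK : Qual S K.
    split => //; first exact: subset_trans KS SQ0.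
    rewrite setIidl // (sE (cubes_meas hF hD cK)) -EFinM lee_fin.
    have := sr_ge0 K; nra.
  by have [K' [mK' K'x]] := exists_max qK Kx; exists K'.
have S'Q0 : S' `<=` Q0 by move=> x [K [[_ KQ0 _] _] Kx]; exact: KQ0.
have me : forall i, measurable (e i).
  move=> i; case: (e1 i) => [->|Mi]; [exact: measurable0|exact: (cubes_meas hF hD (MC _ Mi))].
have sS' : sigma S' = (\sum_(i <oo) sigma (e i))%E.
  by rewrite /S' eU measure_semi_bigcup // -eU.
have eSS : S = \bigcup_i (e i `&` S) by rewrite -setI_bigcupl -eU setIidr.
have sS : sigma S = (\sum_(i <oo) sigma (e i `&` S))%E.
  transitivity (sigma (\bigcup_i (e i `&` S))); first by rewrite -eSS.
  apply: measure_semi_bigcup; [move=> i; exact: measurableI|exact: trivIset_setIr|].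
  by rewrite -eSS.
have term i : ((alpha / 2)%:E * sigma (e i) <= sigma (e i `&` S))%E /\
              (2%:E * sigma (e i `&` S) <= sigma (e i))%E.
  case: (e1 i) => [->|Mi]; first by rewrite set0I measure0 !mule0.
  by split; [case: Mi => -[]|exact: max_half].
exists S'; split; split => //.
- move=> x [K MK Kx]; exists K; split => //; first exact: MC.
  by move=> y Ky; exists K.
- rewrite sS' sS -nneseriesZl; last by move=> i _; exact: measure_ge0.
  by apply: lee_nneseries => [i _ _|i _]; [rewrite mule_ge0 // lee_fin; lra|exact: (term i).1].
- rewrite sS' sS -nneseriesZl; last by move=> i _; exact: measure_ge0.
  by apply: lee_nneseries => [i _ _|i _]; [rewrite mule_ge0 // lee_fin|exact: (term i).2].
- have mf : measurable_fun S' (maxf sigma D w : T -> \bar R).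
    exact: (measurable_funS measurableT (subsetT _) (maxf_meas sigma hF hD w)).
  rewrite -(setDUK SS') ge0_integral_setU //; last 3 first.
  + by rewrite setDUK.
  + by move=> x _; exact: (maxf_ge0 sigma hF hD hw0 x).
  + by rewrite disj_set2E setDIK.
  apply: leeD2l.
  have eD : S' `\` S = \bigcup_i (e i `\` S) by rewrite /S' eU setD_bigcupl.
  have tD : trivIset setT (fun i => e i `\` S).
    by move=> i j _ _ [x [[ei _] [ej _]]]; apply: te => //; exists x.
  have hnu : wmeas sigma w S = (\sum_(i <oo) wmeas sigma w (e i `&` S))%E.
    rewrite /wmeas; transitivity (\int[sigma]_(x in \bigcup_i (e i `&` S)) (w x)%:E)%E.
      by rewrite -eSS.
    apply: ge0_integral_bigcup.
    + by move=> i; exact: measurableI.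
    + exact: wmeasf.
    + by move=> x _; rewrite lee_fin.
    + exact: trivIset_setIr.
  rewrite eD ge0_integral_bigcup; last 4 first.
  + by move=> i; exact: measurableD.
  + by rewrite -eD; apply: measurable_funS mf => //; exact: subDsetl.
  + by move=> x _; exact: (maxf_ge0 sigma hF hD hw0 x).
  + exact: tD.
  rewrite hnu -nneseriesZl; last by move=> i _; exact: wmeas_ge0.
  apply: lee_nneseries => [i _ _|i _]; first by rewrite mule_ge0 ?wmeas_ge0 // lee_fin.
  exact: cube_gain.
by apply: measurableD.
Qed.

Lemma iterate E : measurable E -> E `<=` Q0 ->
  (forall x, E x -> exists K, [/\ cubes D K, K `<=` E & K x]) -> 0 < sr E ->
  exists S (i : nat), [/\ measurable S, E `<=` S, S `<=` Q0,
      (alpha / 2) * sr Q0 <= sr S & (alpha / 2) ^+ i * sr S <= sr E] /\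
    (((i%:R / 2) * nr E)%:E <= \int[sigma]_(x in S) maxf sigma D w x)%E.
Proof.
move=> mE EQ0 cE E0.
have /andP[a0 a1] := halpha.
have mQ0 := cube_meas hF hD hQ0.
pose P j S := [/\ measurable S, E `<=` S, S `<=` Q0 &
    (forall x, S x -> exists K, [/\ cubes D K, K `<=` S & K x])] /\
  [/\ (alpha / 2) ^+ j * sr S <= sr E, 2 ^+ j * sr E <= sr S &
      (((j%:R / 2) * nr E)%:E <= \int[sigma]_(x in S) maxf sigma D w x)%E].
pose G := exists S (i : nat), [/\ measurable S, E `<=` S, S `<=` Q0,
      (alpha / 2) * sr Q0 <= sr S & (alpha / 2) ^+ i * sr S <= sr E] /\
    (((i%:R / 2) * nr E)%:E <= \int[sigma]_(x in S) maxf sigma D w x)%E.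
have claim : forall j, (exists S, P j S /\ sr S < (alpha / 2) * sr Q0) \/ G.
  elim => [|j IH].
    have PE : P 0%N E.
      split; split => //; rewrite ?expr0 ?mul1r //.
      rewrite mul0r mul0r; apply: integral_ge0 => x _.
      exact: (maxf_ge0 sigma hF hD hw0 x).
    case: (ltrP (sr E) ((alpha / 2) * sr Q0)) => h.
      by left; exists E.
    right; exists E, 0%N; case: PE => -[? ? ? _] [? _ ?]; split => //.
  case: IH => [[S [[[mS ES SQ0 cS] [h1 h2 h3]] hlt]]|g]; last by right.
  have hQ : (sigma (Q0 `&` S) < (alpha / 2)%:E * sigma Q0)%E.
    by rewrite setIidr // (sE mS) (sE mQ0) -EFinM lte_fin.
  have [S' [[mS' SS' S'Q0 cS'] [k1 k2 k3]]] := step mS SQ0 cS hQ.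
  move: k1 k2; rewrite (sE mS) (sE mS') -!EFinM !lee_fin => k1 k2.
  have nES : nr E <= nr S.
    have : (wmeas sigma w E <= wmeas sigma w S)%E.
      apply: ge0_subset_integral => //; do ?[exact: wmeasf|by move=> x _; rewrite lee_fin].
    by rewrite (nuE mE) (nuE mS) lee_fin.
  have P' : P j.+1 S'.
    split; split => //.
    - exact: subset_trans ES SS'.
    - rewrite exprSr -mulrA; apply: le_trans h1.
      by apply: ler_wpM2l => //; apply: exprn_ge0; lra.
    - rewrite exprS -mulrA; apply: le_trans k2.
      by apply: ler_wpM2l => //.
    - apply: le_trans k3; rewrite (nuE mS) -EFinM.
      have -> : (j.+1)%:R / 2 * nr E = j%:R / 2 * nr E + 2^-1 * nr E.
        by rewrite -natr1 mulrDl mulrDl mul1r.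
      rewrite EFinD; apply: leeD => //; rewrite lee_fin.
      by apply: ler_wpM2l => //; rewrite invr_ge0.
  case: (ltrP (sr S') ((alpha / 2) * sr Q0)) => h.
    by left; exists S'.
  right; exists S', j.+1; case: P' => -[? ? ? _] [? _ ?]; split => //.
have [j hj] : exists j : nat, (sr E)^-1 < j%:R.
  by exists (Num.bound (sr E)^-1); apply: archi_boundP; rewrite invr_ge0; lra.
have hj2 : j%:R <= (2 : R) ^+ j.
  by rewrite -natrX ler_nat; apply: ltnW; apply: ltn_expl.
case: (claim j) => [[S [[[mS _ _ _] [_ h2 _]] _]]|g]; last exact: g.
exfalso.
have S1 : sr S <= 1.
  by have := probability_le1 sigma mS; rewrite (sE mS) lee_fin.
have ud : (sr E)^-1 * sr E = 1 by rewrite mulVf //; lra.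
have : 1 < 2 ^+ j * sr E by nra.
lra.
Qed.

End step.

Section realpart.
Context {R : realType}.

Lemma ln4_ge1 : 1 <= ln (4 : R).
Proof.
have h2 : ln (2^-1 : R) <= - 2^-1.
  have := @le_ln1Dx R (- 2^-1) ltac:(lra).
  by have -> : (1 - 2^-1 : R) = 2^-1 by lra.
have e4 : (4 : R) = (2^-1 * 2^-1)^-1 by field.
rewrite e4 lnV ?posrE ?mulr_gt0 ?invr_gt0 // lnM ?posrE ?invr_gt0 //.
lra.
Qed.

Lemma ln_lower (L s dd : R) : 0 < s <= 4^-1 -> L = - ln s -> s <= dd <= 1 ->
  - (2 * L * (1 - dd)) <= ln dd.
Proof.
move=> /andP[s0 s4] eL /andP[sd d1].
have d0 : 0 < dd by lra.
have s4' : 4 <= s^-1.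
  by rewrite -[4]invrK lef_pV2 ?posrE ?invr_gt0 //; lra.
have L1 : 1 <= L.
  rewrite eL -lnV ?posrE //; apply: le_trans ln4_ge1 _.
  by rewrite ler_ln ?posrE ?invr_gt0 //; lra.
case: (lerP dd 2^-1) => dh.
  have : ln s <= ln dd by rewrite ler_ln ?posrE.
  nra.
have u0 : 0 < dd^-1 by rewrite invr_gt0.
have ud : dd^-1 * dd = 1 by rewrite mulVf //; lra.
have u2 : dd^-1 <= 2.
  by rewrite -[2]invrK lef_pV2 ?posrE ?invr_gt0 //; lra.
have h := @le_ln1Dx R (dd^-1 - 1) ltac:(lra).
move: h; have -> : 1 + (dd^-1 - 1) = dd^-1 by lra.
rewrite lnV ?posrE // => h.
nra.
Qed.

Lemma final_real (alpha q a sS nE nQ r A : R) (i : nat) :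
  0 < alpha <= 1 / 2 -> 0 < a -> a < q -> (alpha / 2) * q <= sS -> sS <= q ->
  (alpha / 2) ^+ i * sS <= a -> 0 <= nE -> nE <= nQ ->
  (i%:R / 2) * nE + q^-1 * nQ * (q - sS) <= r -> r <= A * nQ ->
  nE <= 2 * A * ln (2 / alpha) / ln (q / a) * nQ.
Proof.
move=> /andP[a0 a1] pa aq sq sSq hi nE0 nEQ hr hrA.
set L := ln (2 / alpha).
set s := alpha / 2.
have s0 : 0 < s by rewrite /s; lra.
have s4 : s <= 4^-1 by rewrite /s; lra.
have q0 : 0 < q by lra.
have sS0 : 0 < sS by rewrite /s in sq *; nra.
have eL : L = - ln s.
  by rewrite /L /s -lnV ?posrE // invf_div.
set dd := sS / q.
have dq : dd * q = sS by rewrite /dd mulrVK //; apply: unitf_gt0.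
have sd : s <= dd <= 1.
  apply/andP; split; rewrite /dd.
    by rewrite ler_pdivlMr //.
  by rewrite ler_pdivrMr // mul1r.
have h04 : 0 < s <= 4^-1 by apply/andP; split.
have hd := ln_lower h04 eL sd.
have d0 : 0 < dd by case/andP: sd => h _; lra.
have hln : ln (q / a) <= i%:R * L - ln dd.
  rewrite ln_div ?posrE //.
  have : ln (s ^+ i * sS) <= ln a by rewrite ler_ln ?posrE ?mulr_gt0 ?exprn_gt0.
  rewrite lnM ?posrE ?exprn_gt0 // lnXn // -mulr_natl.
  have -> : ln dd = ln sS - ln q by rewrite /dd ln_div ?posrE.
  rewrite eL; lra.
have L0 : 0 <= L.
  rewrite eL; have : ln s <= 0 by apply: ln_le0; lra.
  lra.
have r1 : (i%:R / 2) * nE + nE * (1 - dd) <= r.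
  apply: le_trans hr; rewrite lerD2l.
  have -> : q^-1 * nQ * (q - sS) = nQ * (1 - dd).
    by rewrite -dq; field; lra.
  case/andP: sd => _ d1; nra.
have lnpos : 0 < ln (q / a).
  by apply: ln_gt0; rewrite ltr_pdivlMr // mul1r.
have key : nE * ln (q / a) <= 2 * L * r.
  have i0 : 0 <= i%:R :> R by [].
  nra.
rewrite mulrAC ler_pdivlMr //.
nra.
Qed.

End realpart.

Unset Implicit Arguments.

Theorem lemma4p2 (d : measure_display) (T : measurableType d) (R : realType)
  (sigma : probability T R) (F D : nat -> set (set T)) (alpha : R)
  (hF : filtration F) (hD : atomic F D) (hhom : homogeneous sigma D alpha)
  (halpha : 0 < alpha <= 1 / 2)
  (w : T -> R) (hwint : sigma.-integrable setT (fun x => (w x)%:E))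
  (hw0 : forall x, 0 <= w x)
  (Q0 : set T) (hQ0 : cubes D Q0) (A : R)
  (hA : (((fine (sigma Q0))^-1)%:E * \int[sigma]_(x in Q0) maxf sigma D w x
          <= A%:E * avg sigma Q0 w)%E)
  (E : set T) (hEQ0 : E `<=` Q0)
  (hEu : exists C : set (set T),
           C `<=` [set K | cubes D K /\ K `<=` Q0] /\ E = \bigcup_(K in C) K)
  (hEsm : (sigma E < sigma Q0)%E) :
  (wmeas sigma w E <=
     (2 * A * ln (2 / alpha) / ln (fine (sigma Q0) / fine (sigma E)))%:E
       * wmeas sigma w Q0)%E.
Proof.
have /andP[a0 a1] := halpha.
case: hQ0 => m _ hQ0m.
have [C [CC eE]] := hEu.
have mE : measurable E.
  by rewrite eE; apply: (union_cubes_meas hF hD) => K /CC [].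
have cE : forall x, E x -> exists K, [/\ cubes D K, K `<=` E & K x].
  move=> x Ex; have := Ex; rewrite {1}eE => -[K CK Kx]; exists K; split => //.
    by case: (CC _ CK).
  by rewrite eE => y Ky; exists K.
have mQ0 := cube_meas hF hD hQ0m.
have sEQ : sr sigma E < sr sigma Q0.
  by move: hEsm; rewrite (sE sigma mE) (sE sigma mQ0) lte_fin.
have nuE' : forall X, measurable X -> wmeas sigma w X = (nr sigma w X)%:E.
  by move=> X mX; exact: (nuE hwint hw0 mX).
have nE0 : 0 <= nr sigma w E by apply: nr_ge0.
have nEQ : nr sigma w E <= nr sigma w Q0.
  have : (wmeas sigma w E <= wmeas sigma w Q0)%E.
    apply: ge0_subset_integral => //; do ?[exact: (wmeasf hwint)|by move=> x _; rewrite lee_fin].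
  by rewrite (nuE' _ mE) (nuE' _ mQ0) lee_fin.
case: (eqVneq (sr sigma E) 0) => [E0|En0].
  have s0 : sigma E = 0%E by rewrite (sE sigma mE) E0.
  have w0 : wmeas sigma w E = 0%E.
    by apply: null_set_integral => //; exact: (wmeasf hwint).
  rewrite w0 [fine (sigma E)](_ : _ = 0); last exact: E0.
  have -> : ln (fine (sigma Q0) / 0) = 0 :> R by rewrite ln0 // invr0 mulr0.
  by rewrite invr0 mulr0 mul0e.
have Epos : 0 < sr sigma E by rewrite lt_neqAle eq_sym En0 sr_ge0.
have [S [i [[mS ES SQ0 h1 h2] hI]]] :=
  iterate hF hD hhom halpha hwint hw0 hQ0m mE hEQ0 cE Epos.
have mf : measurable_fun Q0 (maxf sigma D w : T -> \bar R).
  exact: (measurable_funS measurableT (subsetT _) (maxf_meas sigma hF hD w)).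
have mQS : measurable (Q0 `\` S) by apply: measurableD.
have hsplit : (\int[sigma]_(x in Q0) maxf sigma D w x =
    \int[sigma]_(x in S) maxf sigma D w x +
    \int[sigma]_(x in Q0 `\` S) maxf sigma D w x)%E.
  have := @ge0_integral_setU _ _ _ sigma S (Q0 `\` S) mS mQS (maxf sigma D w).
  rewrite setDUK //; apply => //.
  - by move=> x _; exact: (maxf_ge0 sigma hF hD hw0 x).
  - by rewrite disj_set2E setDIK.
have eavg : avg sigma Q0 w = ((sr sigma Q0)^-1 * nr sigma w Q0)%:E.
  by rewrite /avg EFinM -(nuE' _ mQ0).
have hlow : (avg sigma Q0 w * sigma (Q0 `\` S) <=
    \int[sigma]_(x in Q0 `\` S) maxf sigma D w x)%E.
  rewrite -integral_cst //.
  apply: ge0_le_integral => //.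
  - by move=> x _; apply: avg_ge0.
  - exact: (measurable_funS measurableT (subsetT _) (maxf_meas sigma hF hD w)).
  - by move=> x [Qx _]; apply: (maxf_ge sigma hD hw0 hQ0m Qx).
have hQS : sr sigma (Q0 `\` S) = sr sigma Q0 - sr sigma S.
  have h := measureDI sigma mQ0 mS; rewrite setIidr // in h.
  have h' : (sr sigma Q0)%:E = (sr sigma (Q0 `\` S) + sr sigma S)%:E.
    by rewrite EFinD -(sE sigma mQ0) -(sE sigma mQS) -(sE sigma mS); exact: h.
  rewrite (EFin_inj h'); by rewrite addrK.
move: hlow; rewrite eavg (sE' sigma mQS) hQS -EFinM => hlow.
move: hA; rewrite eavg hsplit.
have Ige0 : (0 <= \int[sigma]_(x in S) maxf sigma D w x +
    \int[sigma]_(x in Q0 `\` S) maxf sigma D w x)%E.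
  by apply: adde_ge0; apply: integral_ge0 => x _; exact: (maxf_ge0 sigma hF hD hw0 x).
have hlowI := leeD hI hlow.
move: Ige0 hlowI.
case: (\int[sigma]_(x in S) maxf sigma D w x +
    \int[sigma]_(x in Q0 `\` S) maxf sigma D w x)%E => [r| |] // I0 hlowI hA.
  rewrite (nuE' _ mE) (nuE' _ mQ0) -EFinM lee_fin.
  move: hlowI hA; rewrite -EFinD -!EFinM !lee_fin => hlowI hA.
  have q0 : 0 < sr sigma Q0 by lra.
  have hrA : r <= A * nr sigma w Q0.
    by move: hA; rewrite mulrCA ler_pM2l ?invr_gt0.
  have sSq : sr sigma S <= sr sigma Q0 by have := sr_ge0 sigma (Q0 `\` S); rewrite hQS; lra.
  exact: (final_real halpha Epos sEQ h1 sSq h2 nE0 nEQ hlowI hrA).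
exfalso; move: hA.
have q0 : 0 < sr sigma Q0 by have := sr_ge0 sigma E; lra.
rewrite mulry gtr0_sg ?invr_gt0 // mul1e.
by rewrite -EFinM leye_eq.
Qed.
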